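(* Let $K$ and $L$ be finite simplicial complexes. If $K$ and $L$ have the same simple homotopy type, then $\det(K)=\det(L)$, where $\det(K):=|\det(\mathcal{X}(K)_M)|$.
   Context: $\mathcal{X}(K)$ is the face poset of $K$ (simplices ordered by inclusion). For a finite poset $X=\{x_1,\dots,x_n\}$ (with a labelling), $X_M=(x_{i,j})$ is the $n\times n$ matrix with $x_{i,j}=0$ if $x_i\le x_j$ and $x_{i,j}=1$ otherwise. Simple homotopy type of simplicial complexes is in the classical sense of Whitehead (finite sequences of elementary collapses and expansions). *)

(* Defs.v *)
From HB Require Import structures.
From Stdlib Require Import Relations.Relation_Operators.
From mathcomp Require Import all_boot all_algebra finmap.
Set Implicit Arguments. Unset Strict Implicit. Unset Printing Implicit Defensive.
Import GRing.Theory.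
Local Open Scope fset_scope.

Definition is_complex (K : {fset {fset nat}}) : Prop :=
  (forall s, s \in K -> s != fset0) /\
  (forall s t, s \in K -> t `<=` s -> t != fset0 -> t \in K).

Definition elementary_collapse (K K' : {fset {fset nat}}) : Prop :=
  exists sigma tau : {fset nat},
    [/\ sigma \in K, tau \in K, sigma `<` tau & #|` tau| = (#|` sigma|).+1] /\
    (forall rho, rho \in K -> sigma `<=` rho -> rho = sigma \/ rho = tau) /\
    K' = K `\` [fset sigma; tau].

Definition collapse_step (K K' : {fset {fset nat}}) : Prop :=
  [/\ is_complex K, is_complex K' & elementary_collapse K K'].

Definition simple_homotopy_equiv (K L : {fset {fset nat}}) : Prop :=
  clos_refl_sym_trans _ collapse_step K L.

(* Face poset X(K) labelled by the enumeration of K; X(K)_M has entry 0 if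
   x_i <= x_j (inclusion) and 1 otherwise. *)
Definition face_poset_matrix (K : {fset {fset nat}}) :
    'M[int]_(size (enum_fset K)) :=
  \matrix_(i, j)
    (if nth fset0 (enum_fset K) i `<=` nth fset0 (enum_fset K) j then 0 else 1)%R.

Definition det_complex (K : {fset {fset nat}}) : nat :=
  absz (\det (face_poset_matrix K))%R.

(* Main.v *)
Require Import Defs.
From mathcomp Require Import all_boot all_algebra all_fingroup finmap zify.
From Stdlib Require Import Relations.Relation_Operators.
Set Implicit Arguments. Unset Strict Implicit. Unset Printing Implicit Defensive.
Import GRing.Theory.
Module Aux.
Module MA.
Local Open Scope ring_scope.

Definition Mr (T : Type) (R : T -> T -> bool) n (f : 'I_n -> T) : 'M[int]_n :=
  \matrix_(i, j) (if R (f i) (f j) then 0 else 1).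

Lemma core (T : Type) (R : T -> T -> bool) n (f : 'I_n.+1 -> T) (y : 'I_n -> int) :
  \sum_b y b = 1 ->
  (forall a, (if R (f a) (f ord_max) then 1 else 0 : int) =
     (a == ord_max)%:R + \sum_b y b * (if R (f a) (f (widen_ord (leqnSn n) b)) then 1 else 0)) ->
  \det (Mr R f) = - \det (Mr R (fun i => f (widen_ord (leqnSn n) i))).
Proof.
move=> Hy H; set A := Mr R f.
have Hcol a : A a ord_max = - (a == ord_max)%:R + \sum_b y b * A a (widen_ord (leqnSn n) b).
  rewrite !mxE.
  have -> : (if R (f a) (f ord_max) then 0 else 1 : int) = 1 - (if R (f a) (f ord_max) then 1 else 0) by case: ifP.
  rewrite H.
  have -> : \sum_b y b * A a (widen_ord (leqnSn n) b) = \sum_b y b - \sum_b y b * (if R (f a) (f (widen_ord (leqnSn n) b)) then 1 else 0).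
    rewrite -sumrB; apply: eq_bigr => b _; rewrite mxE; case: ifP => _ /=; rewrite ?mulr0 ?mulr1 ?subr0 ?subrr //. 

  by rewrite Hy opprD addrCA.
have Hz b : \sum_a A a (widen_ord (leqnSn n) b) * cofactor A a ord_max = 0.
  have := congr1 (fun M : 'M_n.+1 => M ord_max (widen_ord (leqnSn n) b)) (mul_adj_mx A).
  rewrite /= !mxE.
  have -> : (ord_max == widen_ord (leqnSn n) b) = false.
    by apply/negbTE; rewrite neq_ltn /= ltn_ord orbT.
  rewrite mulr0n => E; apply: (etrans _ E); apply: eq_bigr => a _; rewrite mulrC [(\adj A) _ _]mxE.
  by [].

rewrite (expand_det_col A ord_max).
under eq_bigr => a _ do rewrite Hcol mulrDl mulr_suml.
rewrite big_split /= exchange_big /=.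
rewrite [X in _ + X](_ : _ = 0); last first.
  rewrite big1 // => b _.
  apply: (etrans _ (etrans (congr1 (fun x => y b * x) (Hz b)) (mulr0 _))); rewrite mulr_sumr; apply: eq_bigr => a _.
  by rewrite mulrA.
rewrite addr0 (bigD1 ord_max) //= big1; last first.
  by move=> a /negbTE ->; rewrite oppr0 mul0r.
rewrite eqxx addr0 mulN1r; congr (- _).
rewrite /cofactor.
rewrite -signr_odd addnn odd_double expr0 mul1r; congr (\det _); apply/matrixP => i j; rewrite !mxE.

have E : forall k : 'I_n, lift ord_max k = widen_ord (leqnSn n) k by move=> k; apply: val_inj; rewrite /= /bump leqNgt ltn_ord.
by rewrite !E.
Qed.
End MA.
Export MA.
Module MB.
Local Open Scope ring_scope.

Lemma Mr_tr (T : Type) (R : T -> T -> bool) n (f : 'I_n -> T) :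
  (Mr R f)^T = Mr (fun x y => R y x) f.
Proof. by apply/matrixP => i j; rewrite !mxE. Qed.

Lemma Mr_perm (T : Type) (R : T -> T -> bool) n (f : 'I_n -> T) (p : 'S_n) :
  \det (Mr R (fun i => f (p i))) = \det (Mr R f).
Proof.
have -> : Mr R (fun i => f (p i)) = row_perm p (col_perm p (Mr R f)).
  by apply/matrixP => i j; rewrite !mxE.
rewrite row_permE col_permE !det_mulmx !det_perm odd_permV mulrCA mulrA.
by rewrite -mulrA -expr2 sqrr_sign mulr1.
Qed.

Lemma Mr_cast (T : Type) (R : T -> T -> bool) (x0 : T) (s : seq T) n (H : size s = n) :
  \det (Mr R (fun i : 'I_(size s) => nth x0 s i)) = \det (Mr R (fun i : 'I_n => nth x0 s i)).
Proof. by case: n / H. Qed.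

Lemma Mr_perm_eq (T : eqType) (R : T -> T -> bool) (x0 : T) (s t : seq T) :
  perm_eq s t ->
  \det (Mr R (fun i : 'I_(size s) => nth x0 s i)) = \det (Mr R (fun i : 'I_(size t) => nth x0 t i)).
Proof.
move=> Hp; have Hsz : size t == size s by rewrite (perm_size Hp).
rewrite (Mr_cast R x0 (eqP Hsz)).
set n := size s in Hsz *.
pose tt : n.-tuple T := Tuple Hsz.
have /tuple_permP [p Hs] : perm_eq s tt by [].
have E : forall i : 'I_n, nth x0 s i = nth x0 t (p i).
  move=> i; have -> : nth x0 s i = tnth [tuple tnth tt (p i) | i < n] i.
    by rewrite (tnth_nth x0) -Hs.
  by rewrite tnth_mktuple (tnth_nth x0).
transitivity (\det (Mr R (fun i : 'I_n => nth x0 t (p i)))); last exact: Mr_perm.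
congr (\det _); apply/matrixP => i j; rewrite !mxE !E //.
Qed.
End MB.
Export MB.
Module MC.
Local Open Scope ring_scope.

Definition dl (T : Type) (R : T -> T -> bool) (x0 : T) (s : seq T) : int :=
  \det (Mr R (fun i : 'I_(size s) => nth x0 s i)).

Lemma sum_nth_ord (T : Type) (x0 : T) (s : seq T) (G : T -> int) :
  \sum_(i < size s) G (nth x0 s i) = \sum_(z <- s) G z.
Proof. by rewrite (big_nth x0) big_mkord. Qed.

Lemma step_list (T : eqType) (R : T -> T -> bool) (x0 : T) (s : seq T) (x : T) (g : T -> int) :
  \sum_(z <- s) g z = 1 ->
  (forall z, z \in s -> (if R z x then 1 else 0 : int) = \sum_(w <- s) g w * (if R z w then 1 else 0)) ->
  (if R x x then 1 else 0 : int) = 1 + \sum_(w <- s) g w * (if R x w then 1 else 0) ->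
  dl R x0 (s ++ [:: x]) = - dl R x0 s.
Proof.
move=> H1 H2 H3; rewrite /dl.
have Hsz : size (s ++ [:: x]) = (size s).+1 by rewrite size_cat addn1.
rewrite (Mr_cast R x0 Hsz).
set f := fun i : 'I_(size s).+1 => nth x0 (s ++ [:: x]) i.
have Ew : forall i : 'I_(size s), f (widen_ord (leqnSn _) i) = nth x0 s i.
  by move=> i; rewrite /f /= nth_cat ltn_ord.
have Em : f ord_max = x by rewrite /f /= nth_cat ltnn subnn.
rewrite (@core _ R (size s) f (fun b => g (nth x0 s b))).
- by congr (- \det _); apply/matrixP => i j; rewrite !mxE !Ew.
- by rewrite (sum_nth_ord x0 s g).
move=> a; rewrite Em.
under eq_bigr => b _ do rewrite Ew.
rewrite (sum_nth_ord x0 s (fun w => g w * (if R (f a) w then 1 else 0))).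
have [->|Ha] := eqVneq a ord_max.
  by rewrite Em.
have Ha' : (a < size s)%N.
  have := ltn_ord a; rewrite ltnS leq_eqVlt => /orP [/eqP E|//].
  by case/eqP: Ha; apply: val_inj; rewrite /= E.
rewrite add0r; apply: H2.
by rewrite /f nth_cat Ha' mem_nth.
Qed.
End MC.
Export MC.
Module MD.
Local Open Scope ring_scope.
Local Open Scope fset_scope.

Section S.
Variable K : choiceType.

Lemma sum_sub_supp (X U : {fset K}) (F : K -> int) :
  X `<=` U -> (forall w, w \in U -> w \notin X -> F w = 0) ->
  \sum_(w <- X) F w = \sum_(w <- U) F w.
Proof.
move=> sXU H.
rewrite [RHS](bigID (fun w => w \in X)) /= [X in _ = (_ + X)%R]big1_seq ?addr0; last first.
  by move=> w /andP [Hw HU]; apply: H.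
rewrite -[RHS]big_filter; apply: perm_big; apply: uniq_perm.
- exact: fset_uniq.
- by rewrite filter_uniq // fset_uniq.
by move=> w; rewrite mem_filter; case Hw: (w \in X) => //=; rewrite (fsubsetP sXU).
Qed.

Lemma sum_supp2 (X Y : {fset K}) (F : K -> int) :
  (forall w, F w != 0 -> (w \in X) && (w \in Y)) ->
  \sum_(w <- X) F w = \sum_(w <- Y) F w.
Proof.
move=> H.
have Z : forall w (A : {fset K}), w \notin A -> (forall w, F w != 0 -> w \in A) -> F w = 0.
  by move=> w A wA HA; apply/eqP; apply/negPn/negP => /HA; rewrite (negbTE wA).
rewrite (@sum_sub_supp X (X `|` Y)) ?fsubsetUl //; last first.
  by move=> w _ wX; apply: (Z w X) => // u /H /andP [].
rewrite (@sum_sub_supp Y (X `|` Y)) ?fsubsetUr //.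
by move=> w _ wY; apply: (Z w Y) => // u /H /andP [].
Qed.

Lemma alt_sum (A T : {fset K}) :
  A `<` T ->
  \sum_(w <- fpowerset T) (if A `<=` w then (-1) ^+ #|` w| else 0 : int) = 0.
Proof.
rewrite fproperEneq => /andP [nAT sAT].
have /fsubsetPn [u uT uA] : ~~ (T `<=` A).
  by apply/negP => sTA; move/negP: nAT; apply; rewrite eqEfsubset sAT sTA.
pose h (w : {fset K}) := if u \in w then w `\ u else u |` w.
have hK : involutive h.
  move=> w; rewrite /h; case: (boolP (u \in w)) => uw.
    by rewrite in_fsetD1 eqxx /= fsetD1K.
  by rewrite in_fset1U eqxx /= fsetU1K.
pose F (w : {fset K}) := (if A `<=` w then (-1) ^+ #|` w| else 0 : int).
have hF : forall w, F (h w) = - F w.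
  move=> w; rewrite /F /h; case: (boolP (u \in w)) => uw.
    rewrite fsubsetD1 uA andbT; case: ifP => _; last by rewrite oppr0.
    by rewrite [in RHS](cardfsD1 u w) uw exprD expr1 mulN1r opprK.
  have -> : (A `<=` u |` w) = (A `<=` w).
    apply/idP/idP => [Auw|Aw]; last exact: (fsubset_trans Aw (fsubsetU1 u w)).
    apply/fsubsetP => x xA; have := fsubsetP Auw x xA; rewrite in_fset1U => /orP [/eqP xu|//].
    by move: uA; rewrite -xu xA.
  case: ifP => _; last by rewrite oppr0.
  by rewrite cardfsU1 uw exprD expr1 mulN1r.
have hP : forall w, w \in fpowerset T -> h w \in fpowerset T.
  move=> w; rewrite !fpowersetE /h; case: ifP => _ sw.
    by apply/fsubsetP => x; rewrite in_fsetD1 => /andP [_ /(fsubsetP sw)].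
  by rewrite fsubUset fsub1set uT sw.
set S := \sum_(w <- fpowerset T) _.
have HS : S = - S.
  rewrite /S -sumrN.
  have -> : \sum_(w <- fpowerset T) - (if A `<=` w then (-1) ^+ #|` w| else 0 : int)
       = \sum_(w <- fpowerset T) F (h w) by apply: eq_bigr => w _; rewrite hF.
  rewrite -(big_map h xpredT F); apply: perm_big; apply: uniq_perm.
  - exact: fset_uniq.
  - by rewrite map_inj_uniq ?fset_uniq //; apply: (can_inj hK).
  move=> w; apply/idP/mapP => [wP|[x xP ->]]; last exact: hP.
  by exists (h w); [exact: hP | rewrite hK].
lia.
Qed.
End S.
End MD.
Export MD.
Module ME.
Local Open Scope ring_scope.
Local Open Scope fset_scope.

Notation sub := (@fsubset nat).

Lemma dl_flip (R : {fset nat} -> {fset nat} -> bool) s :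
  dl R fset0 s = dl (fun x y => R y x) fset0 s.
Proof. by rewrite /dl -det_tr Mr_tr. Qed.

Lemma sum_pick (X : {fset {fset nat}}) a (G : {fset nat} -> int) : a \in X ->
  \sum_(z <- X) (z == a)%:R * G z = G a.
Proof.
move=> aX; rewrite (big_fsetD1 a) //= eqxx mul1r big1_seq ?addr0 //.
by move=> z /andP [_]; rewrite in_fsetD1 => /andP [/negbTE -> _]; rewrite mul0r.
Qed.

Lemma collapse_det K K' : is_complex K -> elementary_collapse K K' ->
  det_complex K = det_complex K'.
Proof.
move=> [Kne Kcl] [sg [tau [[sK tK st ct] [free ->]]]].
have dE : forall L, det_complex L = absz (dl sub fset0 (enum_fset L)) by [].
rewrite !dE; congr absz.
set K2 := K `\ sg.
have ts : tau != sg by rewrite fproperEneq eq_sym in st; case/andP: st.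
have tK2 : tau \in K2 by rewrite in_fsetD1 ts.
have step1 : dl sub fset0 (enum_fset K) = - dl sub fset0 (enum_fset K2).
  rewrite {1}/dl (Mr_perm_eq sub fset0 (s := enum_fset K) (t := enum_fset K2 ++ [:: sg])); last first.
    apply: uniq_perm; first exact: fset_uniq.
      by rewrite cat_uniq fset_uniq /= in_fsetD1 eqxx.
    move=> z; rewrite mem_cat in_fsetD1 inE; have [->|zs] := eqVneq z sg; first by rewrite sK orbT.
    by rewrite orbF.
  rewrite -/(dl _ _ _) dl_flip (dl_flip sub (enum_fset K2)).
  apply: (@step_list _ (fun x y => sub y x) fset0 (enum_fset K2) sg (fun w => ((w == tau)%:R : int))).
  - by have := sum_pick (fun _ => 1) tK2; under eq_bigr => z _ do rewrite mulr1.
  - move=> z zK2; rewrite (sum_pick (fun w => if sub w z then 1 else 0) tK2).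
    move: zK2; rewrite in_fsetD1 => /andP [zs zK].
    case: ifP => sz; case: ifP => tz //.
      by case: (free z zK sz) => E; [move: zs; rewrite E eqxx | move: tz; rewrite E fsubset_refl].
    by move: sz; rewrite (fsubset_trans (fproper_sub st) tz).
  - rewrite (sum_pick (fun w => if sub w sg then 1 else 0) tK2) fsubset_refl.
    by move: st; rewrite fproperE => /andP [_ /negbTE ->]; rewrite addr0.
set K3 := K `\` [fset sg; tau].
have [v Hv] : exists v, tau `\` sg = [fset v].
  apply/cardfs1P; rewrite cardfsD.
  have -> : tau `&` sg = sg by apply/fsetIidPr; exact: fproper_sub.
  by rewrite ct subSnn.
have vts : v \in tau `\` sg by rewrite Hv in_fset1.
have vt : v \in tau by move: vts; rewrite in_fsetD => /andP [].
have vs : v \notin sg by move: vts; rewrite in_fsetD => /andP [].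
have tE : forall x, (x \in tau) = (x == v) || (x \in sg).
  move=> x; apply/idP/idP => [xt|/orP [/eqP ->//|xs]]; last exact: (fsubsetP (fproper_sub st)).
  case xs: (x \in sg); rewrite ?orbT //.
  have : x \in tau `\` sg by rewrite in_fsetD xs xt.
  by rewrite Hv in_fset1 => ->.
pose g (w : {fset nat}) : int := if (v \in w) && (w `<` tau) then - (-1) ^+ (#|` tau| + #|` w|) else 0.
have Claim : forall z, z `<=` tau -> v |` z != tau ->
    \sum_(w <- K3) g w * (if sub z w then 1 else 0) = 1.
  move=> z zt vzt.
  rewrite (@sum_supp2 _ K3 (fpowerset tau)); last first.
    move=> w; rewrite /g; case: ifP => [/andP [vw wt] _|]; last by rewrite mul0r eqxx.
    rewrite fpowersetE (fproper_sub wt) andbT in_fsetD in_fset2 (Kcl tau w tK (fproper_sub wt)) ?andbT.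
      rewrite negb_or; apply/andP; split; apply/eqP => E; first by move: vs; rewrite -E vw.
      by move: wt; rewrite E fproperEneq eqxx.
    by apply/fset0Pn; exists v.
  pose c : int := - (-1) ^+ #|` tau|.
  pose F (w : {fset nat}) : int := if (v |` z) `<=` w then (-1) ^+ #|` w| else 0.
  transitivity (\sum_(w <- fpowerset tau) (c * F w + (w == tau)%:R)).
    apply: eq_big_seq => w; rewrite fpowersetE => wt.
    have vzt' : v |` z `<=` tau by rewrite fsubUset fsub1set vt zt.
    have [->|wnt] := eqVneq w tau.
      by rewrite /g /F vzt' fproperEneq eqxx andbF mul0r /c mulNr -expr2 sqrr_sign addNr.
    have wpt : w `<` tau by rewrite fproperEneq wnt wt.
    rewrite /g /F wpt andbT fsubUset fsub1set /c addr0.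
    case: (v \in w); case: (z `<=` w); rewrite /= ?mulr0 ?mul0r ?mulr1 //.
    by rewrite exprD mulNr.
  rewrite big_split /= -mulr_sumr (alt_sum (A := v |` z)); last first.
    by rewrite fproperEneq vzt fsubUset fsub1set vt zt.
  rewrite mulr0 add0r.
  have := @sum_pick (fpowerset tau) tau (fun _ => 1).
  rewrite fpowersetE fsubset_refl => /(_ isT) E; apply: (etrans _ E).
  by apply: eq_bigr => w _; rewrite mulr1.
have step2 : dl sub fset0 (enum_fset K2) = - dl sub fset0 (enum_fset K3).
  rewrite {1}/dl (Mr_perm_eq sub fset0 (s := enum_fset K2) (t := enum_fset K3 ++ [:: tau])); last first.
    apply: uniq_perm; first exact: fset_uniq.
      by rewrite cat_uniq fset_uniq /= in_fsetD in_fset2 eqxx orbT.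
    move=> z; rewrite mem_cat in_fsetD1 in_fsetD in_fset2 inE.
    have [->|zt] := eqVneq z tau; first by rewrite ts tK orbT.
    by rewrite !orbF.
  change (dl sub fset0 (enum_fset K3 ++ [:: tau]) = - dl sub fset0 (enum_fset K3)).
  apply: (@step_list _ sub fset0 (enum_fset K3) tau g).
  - have := Claim fset0 (fsub0set _).
    under eq_bigr => w _ do rewrite fsub0set mulr1.
    apply; apply/eqP => E.
    have /fset0Pn [x xs] := Kne sg sK.
    have := fsubsetP (fproper_sub st) x xs; rewrite -E in_fset1U in_fset0 orbF => /eqP xv.
    by move: vs; rewrite -xv xs.
  - move=> z; rewrite in_fsetD in_fset2 negb_or => /andP [/andP [zs zt] zK].
    case: ifP => ztau.
      rewrite Claim //; apply/eqP => E.
      case vz: (v \in z).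
        move/eqP: zt; apply; apply/fsetP => x; rewrite -E in_fset1U.
        by case: eqVneq => // ->; rewrite vz.
      move/eqP: zs; apply; apply/fsetP => x.
      apply/idP/idP => [xz|xs].
        have := fsubsetP ztau x xz; rewrite tE => /orP [/eqP xv|//].
        by move: vz; rewrite -xv xz.
      have := fsubsetP (fproper_sub st) x xs; rewrite -E in_fset1U => /orP [/eqP xv|//].
      by move: vs; rewrite -xv xs.
    rewrite big1_seq // => w _; rewrite /g; case: ifP => [/andP [_ wt]|]; last by rewrite mul0r.
    case: ifP => zw; last by rewrite mulr0.
    by move: ztau; rewrite (fsubset_trans zw (fproper_sub wt)).
  - rewrite fsubset_refl big1_seq ?addr0 // => w _; rewrite /g; case: ifP => [/andP [_ wt]|]; last by rewrite mul0r.
    by move: wt; rewrite fproperE => /andP [_ /negbTE ->]; rewrite mulr0.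
by rewrite step1 step2 opprK.
Qed.
End ME.
Export ME.
End Aux.
Import Aux.

Theorem mainTheorem7 (K L : {fset {fset nat}}) :
  is_complex K -> is_complex L -> simple_homotopy_equiv K L ->
  det_complex K = det_complex L.
Proof.
move=> _ _ H; elim: H => [x y [cx _ ec]|x|x y _ IH|x y z _ IH1 _ IH2].
- exact: collapse_det cx ec.
- by [].
- by rewrite IH.
- by rewrite IH1 IH2.
Qed.
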